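(* Let $p,q$ be odd primes with $q-p=2$, and let $D=D_1\cdots D_n$ with $D_1,\dots,D_n$ distinct primes, $2\nmid D$, $p\nmid D$, $q\nmid D$. Let $E=E_{+}: y^2=x(x+pD)(x+qD)$ with the $2$-isogeny $\varphi:E\to E'$, $E': y^2=x^3-2(p+q)Dx^2+4D^2x$. For each $i\in\{1,\dots,n\}$ put $$\Pi_i^{+}(D)=\Big(1-\big(\tfrac{-1}{D_i}\big)\Big)+\Big(1-\big(\tfrac{p}{D_i}\big)\Big)+\Big(1-\big(\tfrac{q}{D_i}\big)\Big)+\sum_{j=1,\,j\neq i}^{n}\Big(1-\big(\tfrac{D_j}{D_i}\big)\Big),$$ and $\rho^{+}(D)=\sum_{i=1}^{n}\Big[\frac{1}{1+\Pi_i^{+}(D)}\Big]$. Then: (1) There exists a subset $T\subset\{D_1,\dots,D_n\}$ with $\#T=\rho^{+}(D)$ such that $S^{(\varphi)}(E/\mathbb{Q})\supset\langle T \bmod \mathbb{Q}^{\star 2}\rangle\cong(\mathbb{Z}/2\mathbb{Z})^{\rho^{+}(D)}$. In particular $\dim_2 S^{(\varphi)}(E/\mathbb{Q})\ge\rho^{+}(D)$. (2) If $p\equiv 7 \pmod 8$ and $D_i\equiv 1,7\pmod 8$ for all $1\le i\le n$, then $\dim_2 S^{(\varphi)}(E/\mathbb{Q})\ge\rho^{+}(D)+1$ and $S^{(\varphi)}(E/\mathbb{Q})\supset\langle T\cup\{2\}\bmod\mathbb{Q}^{\star 2}\rangle\cong(\mathbb{Z}/2\mathbb{Z})^{\rho^{+}(D)+1}$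 for some subset $T\subset\{D_1,\dots,D_n\}$ with $\#T=\rho^{+}(D)$.
   Context: $(\frac{\cdot}{\cdot})$ is the Legendre symbol and $[x]$ the greatest integer $\le x$. The isogeny is $\varphi(x,y)=(y^2/x^2,\ y(pqD^2-x^2)/x^2)$ with kernel $\{O,(0,0)\}$. The $\varphi$-Selmer group $S^{(\varphi)}(E/\mathbb{Q})$ is viewed as a subgroup of $\mathbb{Q}^\star/\mathbb{Q}^{\star 2}$: with $S=\{\infty,2,p,q,D_1,\dots,D_n\}$ and $\mathbb{Q}(S,2)=\langle -1,2,p,q,D_1,\dots,D_n\rangle\subset\mathbb{Q}^\star/\mathbb{Q}^{\star 2}$, it equals the set of $d\in\mathbb{Q}(S,2)$ (represented by squarefree integers) such that the curve $C_d: dw^2=d^2-2(p+q)Dd z^2+4D^2z^4$ has a point over $\mathbb{Q}_v$ for every $v\in S$. $\dim_2$ denotes dimension over $\mathbb{F}_2$. *)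

(* Defs.v *)
From HB Require Import structures.
From mathcomp Require Import all_boot all_order all_algebra.
From Stdlib Require Rdefinitions.
From mathcomp Require Import Rstruct.
Set Implicit Arguments. Unset Strict Implicit. Unset Printing Implicit Defensive.
Import Order.TTheory GRing.Theory Num.Theory.
Local Open Scope ring_scope.

Definition legendre (a : int) (P : nat) : int :=
  if (a \in dvdz P%:Z) then 0
  else if [exists x : 'I_P, ((x%:Z ^+ 2 - a) \in dvdz P%:Z)] then 1 else -1.

Definition prodD (Ds : seq nat) : nat := (\prod_(l <- Ds) l)%N.

Definition PiPlus (p q : nat) (Ds : seq nat) (i : 'I_(size Ds)) : int :=
  let Di := nth 0%N Ds i in
  (1 - legendre (-1) Di) + (1 - legendre p%:Z Di) + (1 - legendre q%:Z Di)
  + \sum_(j < size Ds | j != i) (1 - legendre (nth 0%N Ds j)%:Z Di).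

Definition rhoPlus (p q : nat) (Ds : seq nat) : int :=
  \sum_(i < size Ds) Num.floor ((1 + (@PiPlus p q Ds i)%:~R)^-1 : rat).

(* The quartic on the right of C_d, homogenised with weights (1,1,2):
   d^2 Z0^4 - 2(p+q) D d Z0^2 Z^2 + 4 D^2 Z^4. *)
Definition quarticC {R : comPzRingType} (p q D : nat) (d : int) (z0 z : R) : R :=
  d%:~R ^+ 2 * z0 ^+ 4 - 2%:R * (p + q)%:R * D%:R * d%:~R * z0 ^+ 2 * z ^+ 2
  + 4%:R * D%:R ^+ 2 * z ^+ 4.

(* C_d has a real point (on its smooth projective model in the weighted
   projective plane P(1,1,2) with coordinates (Z0 : Z : W)). *)
Definition real_solvable (p q D : nat) (d : int) : Prop :=
  exists z0 z w : Rdefinitions.R, (z0 != 0 \/ z != 0) /\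
    d%:~R * w ^+ 2 = quarticC p q D d z0 z.

(* C_d has a Q_l point, l prime: equivalently (compactness of Z_l) for every
   k there is an integral solution modulo l^k with (Z0, Z) primitive. *)
Definition ladic_solvable (l : nat) (p q D : nat) (d : int) : Prop :=
  forall k : nat, exists z0 z w : int,
    ~~ ((z0 \in dvdz l%:Z) && (z \in dvdz l%:Z)) /\
    ((d * w ^+ 2 - quarticC p q D d z0 z) \in dvdz (expn l k)%:Z).

Definition squarefree (n : nat) : bool :=
  (0 < n)%N && all (fun l => (logn l n <= 1)%N) (primes n).

Definition Sfin (p q : nat) (Ds : seq nat) : seq nat := [:: 2%N, p, q & Ds].

(* d (a squarefree integer) represents an element of Q(S,2) *)
Definition in_QS2 (p q : nat) (Ds : seq nat) (d : int) : bool :=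
  (d != 0) && squarefree `|d|%N && all (fun l => l \in Sfin p q Ds) (primes `|d|%N).

(* phi-Selmer group S^(phi)(E/Q), as a set of squarefree integers *)
Definition in_selmer (p q : nat) (Ds : seq nat) (d : int) : Prop :=
  in_QS2 p q Ds d /\
  real_solvable p q (prodD Ds) d /\
  (forall l, l \in Sfin p q Ds -> ladic_solvable l p q (prodD Ds) d).

(* Main.v *)
Require Import Defs.
From HB Require Import structures.
From mathcomp Require Import all_boot all_order all_algebra.
From mathcomp Require Import finfield zify ring lra.
From Stdlib Require Rdefinitions.
From mathcomp Require Import Rstruct.
Set Implicit Arguments. Unset Strict Implicit. Unset Printing Implicit Defensive.
Import Order.TTheory GRing.Theory Num.Theory.
Local Open Scope ring_scope.

Lemma Zn_nat0 (n m : nat) : (1 < n)%N -> ((m%:R : 'Z_n) == 0) = (n %| m)%N.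
Proof. by move=> n1; rewrite -val_eqE /= val_Zp_nat // -dvdn_eq0 ?dvdn_mod //; rewrite /dvdn. Qed.

Lemma Zn_int0 (n : nat) (z : int) : (1 < n)%N -> ((z%:~R : 'Z_n) == 0) = (n%:Z %| z)%Z.
Proof.
move=> n1; case: z => m.
  by rewrite /= Zn_nat0 // dvdzE.
by rewrite NegzE mulrNz oppr_eq0 Zn_nat0 // dvdzE /= abszN.
Qed.

Lemma Fp_int0 (l : nat) (z : int) : prime l -> ((z%:~R : 'F_l) == 0) = (l%:Z %| z)%Z.
Proof. by move=> pl; rewrite Zn_int0 ?pdiv_id // prime_gt1. Qed.

Lemma PoszX (l k : nat) : ((l ^ k)%N)%:Z = l%:Z ^+ k.
Proof. by rewrite -!natz natrX. Qed.

Definition qr (P : nat) (a : int) := exists x : int, (P%:Z %| x ^+ 2 - a)%Z.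
Definition sqmod (l : nat) (a : int) :=
  forall k, exists y : int, ((l ^ k)%N%:Z %| y ^+ 2 - a)%Z.

Lemma hensel_odd (l : nat) (a : int) : prime l -> odd l -> ~~ (l%:Z %| a)%Z ->
  qr l a -> sqmod l a.
Proof.
move=> pl ol na [x0 hx0].
suff H : forall k, exists y : int, ((l ^ k.+1)%N%:Z %| y ^+ 2 - a)%Z.
  case=> [|k]; last exact: H.
  by exists 0; rewrite expn0 dvd1z.
elim=> [|k [y /dvdzP [c hc]]]; first by exists x0; rewrite expn1.
have hy : (y%:~R : 'F_l) != 0.
  rewrite Fp_int0 //; apply: contra na => ly.
  have -> : a = y ^+ 2 - c * (l ^ k.+1)%N%:Z by rewrite -hc; ring.
  apply: rpredB; first by rewrite expr2 dvdz_mull.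
  by rewrite dvdz_mull // PoszX exprS dvdz_mulr.
have h2 : (2%:R : 'F_l) != 0.
  rewrite Zn_nat0 ?pdiv_id ?prime_gt1 //.
  apply/negP => h; have e : l = 2%N.
    by apply/eqP; rewrite eqn_leq (dvdn_leq _ h) // prime_gt1.
  by rewrite e in ol.
pose t : 'F_l := - (c%:~R) / (2%:R * y%:~R).
have ht : (l%:Z %| c + 2 * y * (nat_of_ord t)%:Z)%Z.
  rewrite -Fp_int0 // rmorphD /= !rmorphM /= (_ : ((nat_of_ord t)%:Z)%:~R = t).
    by rewrite /t rmorph_nat; apply/eqP; field; rewrite hy h2.
  by change ((nat_of_ord t)%:R = t); rewrite natr_Zp.
case/dvdzP: ht => s hs.
exists (y + (nat_of_ord t)%:Z * (l ^ k.+1)%N%:Z).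
apply/dvdzP; exists (s + (nat_of_ord t)%:Z ^+ 2 * (l ^ k)%N%:Z).
rewrite !PoszX in hc hs *.
have -> : (y + (nat_of_ord t)%:Z * l%:Z ^+ k.+1) ^+ 2 - a =
   (y ^+ 2 - a) + (c + 2 * y * (nat_of_ord t)%:Z) * l%:Z ^+ k.+1
   - c * l%:Z ^+ k.+1 + (nat_of_ord t)%:Z ^+ 2 * l%:Z ^+ k.+1 * l%:Z ^+ k.+1 by ring.
rewrite hc hs !exprS; ring.
Qed.

Lemma F2_cases (x : 'F_2) : x = 0 \/ x = 1.
Proof. by case: x => -[|[|]] //= ?; [left|right]; apply: val_inj. Qed.

Lemma hensel_2 (a : int) : (8 %| a - 1)%Z -> sqmod 2 a.
Proof.
move=> ha.
suff H : forall k, exists y : int, ((2 ^ k.+3)%N%:Z %| y ^+ 2 - a)%Z.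
  move=> k; have [y hy] := H k; exists y; apply: dvdz_trans hy.
  by rewrite dvdzE /=; apply: dvdn_exp2l; lia.
elim=> [|k [y /dvdzP [c hc]]].
  by exists 1; rewrite -opprB rpredN expr1n.
have p2 : prime 2 by [].
have hA : (a%:~R : 'F_2) = 1.
  have : ((a - 1)%:~R : 'F_2) == 0 by rewrite Fp_int0 //; exact: dvdz_trans ha.
  by rewrite rmorphB rmorph1 subr_eq0 => /eqP.
have hY : (y%:~R : 'F_2) = 1.
  have : (y%:~R : 'F_2) ^+ 2 = 1.
    rewrite -rmorphXn; have -> : y ^+ 2 = a + c * (2 ^ k.+3)%N%:Z by rewrite -hc; ring.
    rewrite rmorphD rmorphM /= hA (_ : ((2 ^ k.+3)%N%:Z)%:~R = 0 :> 'F_2) ?mulr0 ?addr0 //.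
    by apply/eqP; rewrite Fp_int0 // dvdzE /= dvdn_exp.
  by case: (F2_cases (y%:~R)) => ->; rewrite ?expr0n.
have [ev|od] := boolP (2%:Z %| c)%Z.
  exists y; case/dvdzP: ev => c' ec; rewrite ec in hc; apply/dvdzP; exists c'.
  by rewrite hc !PoszX !exprS; ring.
have hC : (c%:~R : 'F_2) = 1.
  by case: (F2_cases (c%:~R)) => // /eqP; rewrite Fp_int0 // (negbTE od).
have : (2%:Z %| c + y)%Z.
  by rewrite -Fp_int0 // rmorphD /= hC hY; apply/eqP; apply: (pchar_Fp_0 p2).
case/dvdzP => s hs.
exists (y + (2 ^ k.+2)%N%:Z); apply/dvdzP; exists (s + (2 ^ k)%N%:Z).
rewrite !PoszX in hc *.
have -> : (y + 2%:Z ^+ k.+2) ^+ 2 - a = (y ^+ 2 - a) + 2%:Z ^+ k.+3 * y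
   + 2%:Z ^+ k.+2 * 2%:Z ^+ k.+2 by rewrite !exprS; ring.
rewrite hc; have -> : c = s * 2 - y by rewrite -hs; ring.
by rewrite !exprS; ring.
Qed.

Lemma Fp_fermat (P : nat) (x : 'F_P) : prime P -> x != 0 -> x ^+ P.-1 = 1.
Proof.
move=> pP nx; apply: (mulIf nx); rewrite mul1r -exprSr prednK ?prime_gt0 //.
by have := expf_card x; rewrite card_Fp.
Qed.

Lemma Fp_nat_inj (P i j : nat) : prime P -> (i < P)%N -> (j < P)%N ->
  (i%:R : 'F_P) = j%:R -> i = j.
Proof.
move=> pP iP jP /(congr1 val); rewrite /= !val_Fp_nat // !modn_small //.
Qed.

Lemma Fp_nat_eq0 (P i : nat) : prime P -> ((i%:R : 'F_P) == 0) = (P %| i)%N.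
Proof. by move=> pP; rewrite Zn_nat0 ?pdiv_id ?prime_gt1. Qed.

Lemma euler_hard (P : nat) (y : 'F_P) : prime P -> odd P -> y != 0 ->
  y ^+ P./2 = 1 -> exists x, x ^+ 2 = y.
Proof.
move=> pP oP ny hy.
have [/existsP [x /eqP hx]|nsq] := boolP [exists x : 'F_P, x ^+ 2 == y].
  by exists x.
exfalso.
have P3 : (2 < P)%N by move: (prime_gt1 pP) oP; case: (P) => [|[|[|]]].
have eP : P = (2 * P./2).+1 by rewrite mul2n -{1}(odd_double_half P) oP.
have h0 : (0 < P./2)%N by move: P3; case: (P) => [|[|[|]]].
pose rs := y :: [seq ((k.+1)%:R : 'F_P) ^+ 2 | k <- iota 0 P./2].
suff : (size rs < (P./2).+1)%N by rewrite /rs /= size_map size_iota ltnn.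
rewrite -(size_XnsubC (R := 'F_P) 1 h0); apply: max_poly_roots.
- by rewrite -size_poly_eq0 size_XnsubC.
- rewrite /= rootE !hornerE hy subrr eqxx /=.
  apply/allP => z /mapP [k]; rewrite mem_iota add0n => /andP [_ kP] ->.
  rewrite rootE !hornerE -exprM mul2n -[(P./2).*2]addn0.
  have -> : (P./2).*2 = P.-1 by rewrite -mul2n; lia.
  rewrite addn0 Fp_fermat ?subrr //.
  rewrite Fp_nat_eq0 //; apply/negP => /dvdn_leq => /(_ isT).
  by lia.
- rewrite /= map_inj_in_uniq ?iota_uniq ?andbT.
    apply/mapP => -[k _ ek]; move/negP: nsq; apply; apply/existsP.
    by exists (k.+1%:R); rewrite ek.
  move=> i j; rewrite !mem_iota !add0n => /andP [_ iP] /andP [_ jP] /eqP.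
  rewrite -subr_eq0 subr_sqr mulf_eq0 => /orP [].
    have iP' : (i.+1 < P)%N by lia.
    have jP' : (j.+1 < P)%N by lia.
    by rewrite subr_eq0 => /eqP /(Fp_nat_inj pP iP' jP') [].
  rewrite -natrD Fp_nat_eq0 // => /dvdn_leq => /(_ isT).
  by lia.
Qed.

Definition bigb (a P k : nat) : bool := (P./2 < (a * k) %% P)%N.
Definition ff (a P k : nat) : nat :=
  if bigb a P k then (P - (a * k) %% P)%N else ((a * k) %% P)%N.
Definition mu (a P : nat) : nat := count (bigb a P) (iota 1 P./2).

Lemma oddP_eq (P : nat) : odd P -> P = (2 * P./2).+1.
Proof. by move=> oP; rewrite mul2n -{1}(odd_double_half P) oP. Qed.

Lemma ndvd_ak (a P k : nat) : prime P -> ~~ (P %| a)%N -> (0 < k < P)%N ->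
  ~~ (P %| a * k)%N.
Proof.
move=> pP na /andP [k0 kP]; rewrite Euclid_dvdM // negb_or na /=.
by apply/negP => /(dvdn_leq k0); lia.
Qed.

Lemma ff_perm (a P : nat) : prime P -> odd P -> ~~ (P %| a)%N ->
  perm_eq (map (ff a P) (iota 1 P./2)) (iota 1 P./2).
Proof.
move=> pP oP na; have eP := oddP_eq oP.
have hmem : forall k, k \in iota 1 P./2 -> ff a P k \in iota 1 P./2.
  move=> k; rewrite mem_iota => /andP [k1 kh].
  have nd := ndvd_ak pP na (k:=k).
  have r0 : ((a * k) %% P != 0)%N.
    by rewrite -/(dvdn P (a * k)) nd //; apply/andP; split; lia.
  have rP : ((a * k) %% P < P)%N by rewrite ltn_pmod // prime_gt0.
  move: r0 rP; rewrite mem_iota /ff /bigb; move: ((a * k) %% P)%N => r.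
  by case: ifP => h; lia.
have hu : uniq (map (ff a P) (iota 1 P./2)).
  rewrite map_inj_in_uniq ?iota_uniq // => i j; rewrite !mem_iota.
  move=> /andP [i1 ih] /andP [j1 jh].
  have ri : ((a * i) %% P < P)%N by rewrite ltn_pmod // prime_gt0.
  have rj : ((a * j) %% P < P)%N by rewrite ltn_pmod // prime_gt0.
  move=> hf; have Fi := Fp_nat_mod pP (a * i); have Fj := Fp_nat_mod pP (a * j).
  have [e|e] : ((a * i) %% P = (a * j) %% P \/ (a * i) %% P + (a * j) %% P = P)%N.
  - move: hf ri rj; rewrite /ff /bigb.
    move: ((a * i) %% P)%N ((a * j) %% P)%N => x y.
    by case: ifP => ?; case: ifP => ?; lia.
  - move: (congr1 (fun n => (n%:R : 'F_P)) e) => /=; rewrite Fi Fj !natrM.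
    move/eqP; rewrite -subr_eq0 -mulrBr mulf_eq0 Fp_nat_eq0 // (negbTE na) /=.
    by rewrite subr_eq0 => /eqP /(Fp_nat_inj pP); apply; lia.
  - move: (congr1 (fun n => (n%:R : 'F_P)) e) => /=; rewrite natrD Fi Fj.
    rewrite -natrD -mulnDr natrM.
    move/eqP; rewrite pchar_Fp_0 // mulf_eq0 !Fp_nat_eq0 // (negbTE na) /=.
    have ij : (0 < i + j)%N by lia.
    move=> /(dvdn_leq ij); lia.
have sub : {subset map (ff a P) (iota 1 P./2) <= iota 1 P./2}.
  by move=> k /mapP [x hx ->]; exact: hmem.
have [_ he] := uniq_min_size hu sub (eq_leq (esym (size_map _ _))).
exact: uniq_perm hu (iota_uniq _ _) he.
Qed.

Lemma prod_scal (R : comNzRingType) (s : seq nat) (c : R) (F : nat -> R) :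
  \prod_(k <- s) (c * F k) = c ^+ size s * \prod_(k <- s) F k.
Proof.
elim: s => [|x s IH]; first by rewrite !big_nil mulr1.
by rewrite !big_cons IH /= exprS -!mulrA; congr (_ * _); rewrite mulrCA.
Qed.

Lemma sum_bool (s : seq nat) (Q : pred nat) : (\sum_(k <- s) (Q k : nat))%N = count Q s.
Proof. by elim: s => [|x s IH]; rewrite ?big_nil // big_cons IH. Qed.


Lemma gauss (a P : nat) : prime P -> odd P -> ~~ (P %| a)%N ->
  (a%:R : 'F_P) ^+ P./2 = (-1) ^+ mu a P.
Proof.
move=> pP oP na.
have e1 : \prod_(k <- iota 1 P./2) ((a * k)%:R : 'F_P) =
          a%:R ^+ P./2 * \prod_(k <- iota 1 P./2) (k%:R : 'F_P).
  by under eq_bigr do rewrite natrM; rewrite prod_scal size_iota.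
have e2 : \prod_(k <- iota 1 P./2) ((a * k)%:R : 'F_P) =
          (-1) ^+ mu a P * \prod_(k <- iota 1 P./2) (k%:R : 'F_P).
  rewrite (eq_big_seq (fun k => (-1) ^+ bigb a P k * ((ff a P k)%:R : 'F_P))).
    rewrite big_split /= prodrXr sum_bool -/(mu a P); congr (_ * _).
    by rewrite -(big_map (ff a P) xpredT (fun k => (k%:R : 'F_P))) (perm_big _ (ff_perm pP oP na)).
  move=> k _; rewrite -[((a * k)%:R : 'F_P)](Fp_nat_mod pP) /ff.
  have rP : ((a * k) %% P <= P)%N by apply: ltnW; rewrite ltn_pmod // prime_gt0.
  case: (bigb a P k).
    by rewrite (natrB _ rP) (pchar_Fp_0 pP) expr1 sub0r mulN1r opprK.
  by rewrite expr0 mul1r.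
have nz : \prod_(k <- iota 1 P./2) (k%:R : 'F_P) != 0.
  rewrite prodf_seq_neq0; apply/allP => k; rewrite mem_iota => /andP [k1 kh] /=.
  have eP := oddP_eq oP.
  rewrite Fp_nat_eq0 //; apply/negP => /(dvdn_leq k1); lia.
by apply: (mulIf nz); rewrite -e1 -e2.
Qed.

Definition Ssum (a P : nat) : nat := (\sum_(k <- iota 1 P./2) ((a * k) %/ P))%N.

Lemma odd_sum_rel (s : seq nat) (F G : nat -> nat) (Q : pred nat) :
  (forall k, k \in s -> odd (F k) = odd (G k) (+) Q k) ->
  odd (\sum_(k <- s) F k) = odd (\sum_(k <- s) G k) (+) odd (count Q s).
Proof.
elim: s => [|x s IH] hk; first by rewrite !big_nil.
have hx := hk x (mem_head _ _).
have hs : forall k, k \in s -> odd (F k) = odd (G k) (+) Q k.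
  by move=> k ks; apply: hk; rewrite in_cons ks orbT.
have hc : count Q (x :: s) = (Q x + count Q s)%N by [].
rewrite !big_cons !oddD hx (IH hs) ?oddb.
by case: (odd (G x)); case: (Q x); case: (odd (\sum_(k <- s) G k)); case: (odd (count Q s)).
Qed.

Lemma parity (a P : nat) : prime P -> odd P -> ~~ (P %| a)%N -> odd a ->
  odd (mu a P) = odd (Ssum a P).
Proof.
move=> pP oP na oa.
have h1 : odd (\sum_(k <- iota 1 P./2) a * k)%N = odd (\sum_(k <- iota 1 P./2) k)%N.
  by rewrite -big_distrr oddM oa.
have h2 : (\sum_(k <- iota 1 P./2) a * k =
     Ssum a P * P + \sum_(k <- iota 1 P./2) ((a * k) %% P))%N.
  rewrite /Ssum big_distrl -big_split; apply: eq_bigr => k _; exact: divn_eq.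
have h3 : odd (\sum_(k <- iota 1 P./2) ((a * k) %% P))%N =
          odd (\sum_(k <- iota 1 P./2) ff a P k)%N (+) odd (mu a P).
  apply: odd_sum_rel => k _; rewrite /ff.
  have rP : ((a * k) %% P <= P)%N by apply: ltnW; rewrite ltn_pmod // prime_gt0.
  case: (bigb a P k); last by rewrite addbF.
  by rewrite (oddB rP) oP; case: (odd _).
have h4 : (\sum_(k <- iota 1 P./2) ff a P k = \sum_(k <- iota 1 P./2) k)%N.
  by rewrite -(big_map (ff a P) xpredT (fun k => k)) (perm_big _ (ff_perm pP oP na)).
move: h1; rewrite h2 oddD oddM oP andbT h3 h4.
by case: (odd (mu a P)); case: (odd (Ssum a P)); case: (odd _).
Qed.

Lemma count_le (c n : nat) : count (fun j => (j <= c)%N) (iota 1 n) = minn n c.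
Proof.
elim: n => [|n IH]; first by rewrite min0n.
rewrite -[n.+1]addn1 iotaD count_cat IH /= add1n addn0.
by case: (leqP n.+1 c) => h /=; lia.
Qed.

Lemma ne_ajbk (a b j k : nat) : prime a -> prime b -> a != b -> (0 < k < a)%N ->
  (a * j != b * k)%N.
Proof.
move=> pa pb nab /andP [k0 ka]; apply/eqP => e.
have : (a %| b * k)%N by rewrite -e dvdn_mulr.
rewrite Euclid_dvdM // dvdn_prime2 // (negbTE nab) /=.
by move/(dvdn_leq k0); lia.
Qed.

Lemma quo_count (a b k hb : nat) : prime a -> prime b -> a != b -> (0 < k < a)%N ->
  ((b * k) %/ a <= hb)%N ->
  ((b * k) %/ a)%N = count (fun j => a * j < b * k)%N (iota 1 hb).
Proof.
move=> pa pb nab hk hq.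
rewrite (@eq_in_count _ _ (fun j => j <= (b * k) %/ a)%N).
  by rewrite count_le; apply/esym/minn_idPr.
move=> j _ /=; rewrite leq_divRL ?prime_gt0 // ltn_neqAle mulnC.
by rewrite [(j * a)%N]mulnC (ne_ajbk j pa pb nab hk).
Qed.

Lemma sum_const_seq (s : seq nat) (c : nat) : (\sum_(k <- s) c)%N = (size s * c)%N.
Proof. by elim: s => [|x s IH]; rewrite ?big_nil ?big_cons ?IH //= mulSn. Qed.

Lemma lattice (a b : nat) : prime a -> prime b -> odd a -> odd b -> a != b ->
  (Ssum b a + Ssum a b)%N = (a./2 * b./2)%N.
Proof.
move=> pa pb oa ob nab.
have ea := oddP_eq oa; have eb := oddP_eq ob.
have E1 : Ssum b a = (\sum_(k <- iota 1 a./2) \sum_(j <- iota 1 b./2) (a * j < b * k : nat))%N.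
  apply: eq_big_seq => k; rewrite mem_iota => /andP [k1 kh].
  rewrite sum_bool; apply: quo_count => //; first by apply/andP; split; lia.
  by rewrite -ltnS ltn_divLR ?prime_gt0 //; nia.
have E2 : Ssum a b = (\sum_(j <- iota 1 b./2) \sum_(k <- iota 1 a./2) (b * k < a * j : nat))%N.
  apply: eq_big_seq => j; rewrite mem_iota => /andP [j1 jh].
  rewrite sum_bool; apply: quo_count => //; first by rewrite eq_sym.
    by apply/andP; split; lia.
  by rewrite -ltnS ltn_divLR ?prime_gt0 //; nia.
rewrite E1 E2 (exchange_big _ (iota 1 b./2)) -big_split /=.
rewrite (eq_big_seq (fun _ => b./2)) ?sum_const_seq ?size_iota //.
move=> k; rewrite mem_iota => /andP [k1 kh].
rewrite -big_split /= (eq_big_seq (fun _ => 1%N)) ?sum_const_seq ?size_iota ?muln1 //.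
move=> j _; have hk : (0 < k < a)%N by apply/andP; split; lia.
have := ne_ajbk j pa pb nab hk.
by case: ltngtP.
Qed.

Lemma test_lia (P h : nat) : (P %% 8 = 7)%N -> P = (2 * h).+1 -> (h %% 4 = 3)%N.
Proof. lia. Qed.

Lemma qr_Fp (P : nat) (a : int) : prime P ->
  qr P a <-> exists x : 'F_P, x ^+ 2 = a%:~R.
Proof.
move=> pP; split.
  case=> x hx; exists (x%:~R); apply/eqP; rewrite -subr_eq0 -rmorphXn -rmorphB.
  by rewrite Fp_int0.
case=> x hx; exists (nat_of_ord x)%:Z; rewrite -Fp_int0 // rmorphB rmorphXn /=.
have -> : (((nat_of_ord x)%:Z)%:~R : 'F_P) = x by change ((nat_of_ord x)%:R = x); rewrite natr_Zp.
by rewrite hx subrr.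
Qed.

Lemma legendre1 (a : int) (P : nat) : legendre a P = 1 ->
  ~~ (P%:Z %| a)%Z /\ qr P a.
Proof.
rewrite /legendre; case: ifP => // ha; case: ifP => // /existsP [x hx] _.
by split; [apply/negbT | exists (nat_of_ord x)%:Z].
Qed.

Lemma neg1_ne1 (P : nat) : prime P -> odd P -> (-1 : 'F_P) != 1.
Proof.
move=> pP oP; apply/negP => /eqP h.
have : (2%:R : 'F_P) == 0 by rewrite -[2%N]/(1 + 1)%N natrD -{1}h addNr.
rewrite Fp_nat_eq0 // => h2; have e : P = 2%N.
  by apply/eqP; rewrite eqn_leq (dvdn_leq _ h2) // prime_gt1.
by rewrite e in oP.
Qed.

Lemma sign_pow (P n : nat) : prime P -> odd P -> ((-1 : 'F_P) ^+ n == 1) = ~~ odd n.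
Proof.
move=> pP oP; rewrite -signr_odd; case: (odd n); last by rewrite expr0 eqxx.
by rewrite expr1 (negbTE (neg1_ne1 pP oP)).
Qed.

Lemma odd_mod2 (n : nat) : odd n = (n %% 2 == 1)%N.
Proof. by rewrite modn2; case: (odd n). Qed.

Lemma Fp_pow_h (P b : nat) : prime P -> odd P -> ~~ (P %| b)%N -> qr P b%:Z ->
  (b%:R : 'F_P) ^+ P./2 = 1.
Proof.
move=> pP oP nb /(qr_Fp _ pP) [x hx].
have hb : (b%:Z)%:~R = (b%:R : 'F_P) by [].
have nx : x != 0.
  by apply: contra nb => /eqP x0; move: hx; rewrite x0 expr0n /= hb => /esym/eqP; rewrite Fp_nat_eq0.
rewrite -hb -hx -exprM mul2n -[(P./2).*2]/(P./2).*2.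
have -> : (P./2).*2 = P.-1 by have := oddP_eq oP; rewrite -mul2n; lia.
exact: Fp_fermat.
Qed.

Lemma recip (a b : nat) : prime a -> prime b -> odd a -> odd b -> a != b ->
  (a %% 4 = 1)%N -> qr a b%:Z -> qr b a%:Z.
Proof.
move=> pa pb oa ob nab a4 hq.
have nab' : ~~ (a %| b)%N by rewrite dvdn_prime2.
have nba' : ~~ (b %| a)%N by rewrite dvdn_prime2 // eq_sym.
have h1 := Fp_pow_h pa oa nab' hq.
rewrite gauss // in h1.
have m1 : ~~ odd (mu b a) by rewrite -(sign_pow _ pa oa) h1.
rewrite parity // in m1.
have ha : ~~ odd (a./2).
  have := oddP_eq oa; rewrite odd_mod2; lia.
have hl := lattice pa pb oa ob nab.
have m2 : ~~ odd (Ssum a b).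
  by move: (congr1 odd hl); rewrite oddD oddM (negbTE ha) (negbTE m1) /= => ->.
rewrite -parity // in m2.
have h2 : (a%:R : 'F_b) ^+ b./2 = 1 by rewrite gauss //; apply/eqP; rewrite sign_pow.
have nz : (a%:R : 'F_b) != 0 by rewrite Fp_nat_eq0.
have [x hx] := euler_hard pb ob nz h2.
by apply/(qr_Fp _ pb); exists x.
Qed.

Lemma supp1 (P : nat) : prime P -> odd P -> qr P (-1) -> (P %% 4 = 1)%N.
Proof.
move=> pP oP /(qr_Fp _ pP) [x hx].
have nx : x != 0.
  apply/negP => /eqP x0; move: hx; rewrite x0 expr0n /= => /eqP.
  by rewrite eq_sym rmorphN rmorph1 oppr_eq0 oner_eq0.
have := Fp_fermat pP nx.
have -> : P.-1 = (2 * P./2)%N by have := oddP_eq oP; lia.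
rewrite exprM hx rmorphN rmorph1 => /eqP; rewrite sign_pow //.
have := oddP_eq oP; rewrite odd_mod2 in oP; lia.
Qed.

Lemma count_gt (c n : nat) : count (fun j => (c < j)%N) (iota 1 n) = (n - c)%N.
Proof.
have := count_predC (fun j => (j <= c)%N) (iota 1 n).
rewrite count_le size_iota.
rewrite (@eq_count _ (predC (fun j => (j <= c)%N)) (fun j => (c < j)%N)).
  lia.
by move=> j /=; rewrite ltnNge.
Qed.

Lemma supp2 (P : nat) : prime P -> (P %% 8 = 1 \/ P %% 8 = 7)%N -> qr P 2.
Proof.
move=> pP h8.
have oP : odd P by rewrite odd_mod2; lia.
have eP := oddP_eq oP.
have n2 : ~~ (P %| 2)%N.
  have := prime_gt1 pP; move=> g1; apply/negP => /(@dvdn_leq P 2 isT); lia.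
have g := gauss pP oP n2.
have hm : mu 2 P = (P./2 - (P./2)./2)%N.
  rewrite /mu -count_gt; apply: eq_in_count => k; rewrite mem_iota => /andP [k1 kh].
  rewrite /bigb modn_small; last by lia.
  have := odd_double_half (P./2); rewrite -mul2n.
  by case: (odd _) => /= he; lia.
have hh := odd_double_half (P./2).
have ev : ~~ odd (mu 2 P).
  rewrite hm odd_mod2; move: hh; rewrite -mul2n.
  by case: (odd _) => /= he; lia.
have h2 : (2%:R : 'F_P) ^+ P./2 = 1 by rewrite g; apply/eqP; rewrite sign_pow.
have nz : (2%:R : 'F_P) != 0 by rewrite Fp_nat_eq0.
have [x hx] := euler_hard pP oP nz h2.
by apply/(qr_Fp _ pP); exists x.
Qed.

Lemma real_pos (p q D : nat) (d : int) : 0 < d -> real_solvable p q D d.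
Proof.
move=> d0; exists 1, 0, (Num.sqrt (d%:~R : Rdefinitions.R)); split.
  by left; apply: oner_neq0.
rewrite /quarticC sqr_sqrtr ?ler0z ?ltW // expr1n expr0n /=.
by rewrite !mulr0 !mulr1 expr0n /= mulr0 subr0 addr0 expr2.
Qed.

Lemma quartic_cast (R : comNzRingType) (p q D : nat) (d z0 z : int) :
  ((quarticC p q D d z0 z : int)%:~R : R) = quarticC p q D d (z0%:~R) (z%:~R).
Proof.
rewrite /quarticC !(rmorphD, rmorphN, rmorphM, rmorphXn) /= !intz !rmorph_nat.
by [].
Qed.

Lemma lk_gt1 (l k : nat) : prime l -> (0 < k)%N -> (1 < l ^ k)%N.
Proof. by move=> pl k0; rewrite -{1}(expn0 l) ltn_exp2l // prime_gt1. Qed.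

Lemma Zn_natK (n : nat) (W : 'Z_n) : (((nat_of_ord W)%:Z)%:~R : 'Z_n) = W.
Proof. by change ((nat_of_ord W)%:R = W); rewrite natr_Zp. Qed.

Lemma ladic_Zn (l p q D : nat) (d : int) : prime l ->
  (forall k, (0 < k)%N -> exists z0 z : int,
      ~~ ((l%:Z %| z0)%Z && (l%:Z %| z)%Z) /\
      exists W : 'Z_(l ^ k), d%:~R * W ^+ 2 = quarticC p q D d z0%:~R z%:~R) ->
  ladic_solvable l p q D d.
Proof.
move=> pl H [|k].
  exists 1, 0, 0; split; last by rewrite expn0 dvd1z.
  by rewrite dvdz1 /= negb_and; apply/orP; left; have := prime_gt1 pl; case: (l) => [|[|]].
have [z0 [z [hp [W hW]]]] := H k.+1 isT.
exists z0, z, (nat_of_ord W)%:Z; split => //.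
rewrite -Zn_int0 ?lk_gt1 //.
by rewrite rmorphB rmorphM rmorphXn /= Zn_natK quartic_cast hW subrr.
Qed.

Lemma sq_cast (l : nat) (a : int) k : prime l -> (0 < k)%N -> sqmod l a ->
  exists Y : 'Z_(l ^ k), Y ^+ 2 = a%:~R.
Proof.
move=> pl k0 /(_ k) [y hy]; exists (y%:~R); apply/eqP; rewrite -subr_eq0.
by rewrite -rmorphXn -rmorphB Zn_int0 ?lk_gt1.
Qed.

Lemma ladic_sq (l p q D : nat) (d : int) : prime l -> sqmod l d ->
  ladic_solvable l p q D d.
Proof.
move=> pl hs; apply: ladic_Zn => // k k0.
exists 1, 0; split.
  by rewrite dvdz1 /= negb_and; apply/orP; left; have := prime_gt1 pl; case: (l) => [|[|]].
have [Y hY] := sq_cast (k:=k) pl k0 hs; exists Y.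
rewrite /quarticC hY rmorph1 rmorph0 expr0n /= expr1n !mulr0 !mulr1 expr0n /= mulr0 subr0 addr0.
by rewrite expr2.
Qed.

Lemma qr_mul (l : nat) (a b : int) : qr l a -> qr l b -> qr l (a * b).
Proof.
case=> x /dvdzP [u hu] [y /dvdzP [v hv]]; exists (x * y); apply/dvdzP.
exists (u * y ^+ 2 + a * v).
have -> : (x * y) ^+ 2 - a * b = (x ^+ 2 - a) * y ^+ 2 + a * (y ^+ 2 - b) by ring.
by rewrite hu hv; ring.
Qed.

Lemma PoszM' (m n : nat) : ((m * n)%N)%:Z = m%:Z * n%:Z.
Proof. by rewrite PoszM. Qed.

Lemma qr_prod (l : nat) (U : seq nat) : (forall x, x \in U -> qr l x%:Z) ->
  qr l (\prod_(x <- U) x)%N%:Z.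
Proof.
elim: U => [|x U IH] h; first by rewrite big_nil; exists 1; rewrite expr1n subrr dvdz0.
rewrite big_cons PoszM'; apply: qr_mul; first by apply: h; rewrite mem_head.
by apply: IH => y yU; apply: h; rewrite in_cons yU orbT.
Qed.

Lemma prime_in_prod (l : nat) (U : seq nat) : prime l -> all prime U ->
  (l %| \prod_(x <- U) x)%N -> l \in U.
Proof.
move=> pl; elim: U => [|x U IH]; first by rewrite big_nil dvdn1 => _ /eqP h; rewrite h in pl.
case/andP=> px pU; rewrite big_cons Euclid_dvdM // => /orP [].
  by rewrite dvdn_prime2 // in_cons => ->.
by move=> h; rewrite in_cons IH ?orbT.
Qed.

Lemma prod_gt0 (U : seq nat) : all prime U -> (0 < \prod_(x <- U) x)%N.
Proof.
elim: U => [|x U IH]; first by rewrite big_nil.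
by case/andP=> px pU; rewrite big_cons muln_gt0 prime_gt0 // IH.
Qed.

Lemma logn_prod (l : nat) (U : seq nat) : prime l -> uniq U -> all prime U ->
  logn l (\prod_(x <- U) x) = (l \in U).
Proof.
move=> pl; elim: U => [|x U IH]; first by rewrite big_nil logn1.
case/andP=> xU uU /andP [px pU]; rewrite big_cons lognM ?(prime_gt0 px) ?(prod_gt0 pU) //.
rewrite logn_prime // IH // in_cons.
by case: eqP => [->|] /=; rewrite ?(negbTE xU).
Qed.

Lemma mod_prod (U : seq nat) (k : nat) : (1 < k)%N ->
  (forall x, x \in U -> x %% k = 1)%N -> ((\prod_(x <- U) x) %% k = 1)%N.
Proof.
move=> k1; elim: U => [|x U IH] h; first by rewrite big_nil modn_small.
rewrite big_cons -modnMm (h x (mem_head _ _)) IH; first by rewrite muln1 modn_small.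
by move=> y yU; apply: h; rewrite in_cons yU orbT.
Qed.

Lemma prodD_split (Ds U : seq nat) : uniq U -> {subset U <= Ds} -> uniq Ds ->
  prodD Ds = (\prod_(x <- U) x * \prod_(y <- [seq y <- Ds | y \notin U]) y)%N.
Proof.
move=> uU sU uD; rewrite /prodD (bigID (fun y => y \in U)) /= big_filter.
congr (_ * _); rewrite -big_filter; apply: perm_big; apply: uniq_perm.
- exact: filter_uniq.
- exact: uU.
- by move=> y; rewrite mem_filter; case yU: (y \in U) => //=; rewrite sU.
Qed.

Lemma QS2_prod (p q : nat) (Ds V : seq nat) : uniq V -> all prime V ->
  {subset V <= Sfin p q Ds} -> in_QS2 p q Ds (\prod_(x <- V) x)%N%:Z.
Proof.
move=> uV pV sV; rewrite /in_QS2 /squarefree /=.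
have g0 := prod_gt0 pV.
rewrite -lt0n g0 /=; apply/andP; split.
  apply/allP => l; rewrite mem_primes => /and3P [pl _ _].
  by rewrite logn_prod //; case: (l \in V).
apply/allP => l; rewrite mem_primes => /and3P [pl _ dl].
by apply: sV; apply: prime_in_prod pl pV dl.
Qed.

Lemma case_root1 (l p q m e : nat) : prime l -> q = (p + 2)%N ->
  sqmod l p%:Z -> sqmod l q%:Z -> sqmod l e%:Z ->
  ladic_solvable l p q (m * e) m%:Z.
Proof.
move=> pl hq sp sq se; apply: ladic_Zn => // k k0.
have [A hA] := sq_cast (k:=k) pl k0 sp.
have [B hB] := sq_cast (k:=k) pl k0 sq.
have [E hE] := sq_cast (k:=k) pl k0 se.
exists (nat_of_ord (E * (A + B)))%:Z, 1; split.
  by rewrite negb_and dvdz1 /=; apply/orP; right; have := prime_gt1 pl; case: (l) => [|[|]].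
exists 0; rewrite Zn_natK rmorph1.
have hA' : A ^+ 2 = p%:R by rewrite hA.
have hB' : B ^+ 2 = q%:R by rewrite hB.
have hE' : E ^+ 2 = e%:R by rewrite hE.
have h4 : (4%:R : 'Z_(l ^ k)) = (B ^+ 2 - A ^+ 2) ^+ 2.
  by rewrite hA' hB' hq natrD; ring.
rewrite /quarticC h4 natrD !natrM -hA' -hB' -hE' /=.
ring.
Qed.

Lemma case_root2 (l p q m e : nat) : prime l -> odd l -> q = (p + 2)%N ->
  sqmod l p%:Z -> sqmod l q%:Z -> sqmod l e%:Z -> sqmod l 2 ->
  ladic_solvable l p q (m * e) (2 * m)%N%:Z.
Proof.
move=> pl ol hq sp sq se s2; apply: ladic_Zn => // k k0.
have [A hA] := sq_cast (k:=k) pl k0 sp.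
have [B hB] := sq_cast (k:=k) pl k0 sq.
have [E hE] := sq_cast (k:=k) pl k0 se.
have [S hS] := sq_cast (k:=k) pl k0 s2.
exists (nat_of_ord (E * (A + B)))%:Z, (nat_of_ord S)%:Z; split.
  rewrite negb_and; apply/orP; right; apply/negP => hl.
  have : (l%:Z %| (nat_of_ord S)%:Z ^+ 2 - 2)%Z.
    apply: (@dvdz_trans (l ^ k)%N%:Z).
      by rewrite dvdzE /= -{1}(expn1 l) dvdn_exp2l.
    by rewrite -Zn_int0 ?lk_gt1 // rmorphB rmorphXn /= Zn_natK hS subrr.
  move=> h; have : (l%:Z %| (nat_of_ord S)%:Z ^+ 2 - ((nat_of_ord S)%:Z ^+ 2 - 2))%Z.
    by apply: rpredB => //; rewrite expr2 dvdz_mull.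
  have -> : (nat_of_ord S)%:Z ^+ 2 - ((nat_of_ord S)%:Z ^+ 2 - 2) = 2%:Z by ring.
  rewrite dvdzE /= => h2; have e2 : l = 2%N.
    by apply/eqP; rewrite eqn_leq (dvdn_leq _ h2) // prime_gt1.
  by rewrite e2 in ol.
exists 0; rewrite !Zn_natK.
have hA' : A ^+ 2 = p%:R by rewrite hA.
have hB' : B ^+ 2 = q%:R by rewrite hB.
have hE' : E ^+ 2 = e%:R by rewrite hE.
have hT : (2%:R : 'Z_(l ^ k)) = B ^+ 2 - A ^+ 2.
  by rewrite hA' hB' hq natrD; ring.
have hS' : S ^+ 2 = B ^+ 2 - A ^+ 2 by rewrite hS -hT.
have h4 : (4%:R : 'Z_(l ^ k)) = (B ^+ 2 - A ^+ 2) ^+ 2 by rewrite -hT; ring.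
have hS4 : S ^+ 4 = (B ^+ 2 - A ^+ 2) ^+ 2 by rewrite -hS'; ring.
rewrite /quarticC h4 hS4 (_ : S ^+ 2 = B ^+ 2 - A ^+ 2) // natrD !natrM.
have -> : ((2 * m)%N%:Z)%:~R = (B ^+ 2 - A ^+ 2) * m%:R.
  by rewrite PoszM rmorphM -hT.
rewrite -hA' -hB' -hE' /=.
ring.
Qed.

Lemma case_2a (p q D m : nat) : odd p -> q = (p + 2)%N -> odd D -> (m %% 8 = 5)%N ->
  ladic_solvable 2 p q D m%:Z.
Proof.
move=> op hq oD m8.
pose a := (m %/ 8)%N; pose b := D./2; pose c := p./2.
have hm : m%:Z = 8 * a%:Z + 5 by rewrite /a {1}(divn_eq m 8) m8 PoszD PoszM mulrC.
have hD : D%:Z = 2 * b%:Z + 1 by rewrite /b {1}(oddP_eq oD) -addn1 PoszD PoszM.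
have hp : p%:Z = 2 * c%:Z + 1 by rewrite /c {1}(oddP_eq op) -addn1 PoszD PoszM.
pose R := quarticC (R := int) p q D m%:Z 1 1.
have hR : (8 %| m%:Z * R - 1)%Z.
  apply/dvdzP; exists (64 * a%:Z ^+ 3 + 120 * a%:Z ^+ 2 + 79 * a%:Z + 18
     + 2 * (8 * a%:Z + 5) * b%:Z * (b%:Z + 1)
     - (c%:Z + 1) * (2 * b%:Z + 1) * (8 * a%:Z + 5) ^+ 2).
  rewrite /R /quarticC natrD hq natrD !natz intz hm hD hp.
  ring.
have s2 := hensel_2 hR.
apply: ladic_Zn => // k k0.
exists 1, 1; split; first by rewrite negb_and dvdz1.
have [Y hY] := sq_cast (k:=k) (isT : prime 2) k0 s2.
have uM : (m%:R : 'Z_(2 ^ k)) \is a GRing.unit.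
  rewrite unitZpE ?lk_gt1 //; apply: coprimeXl; rewrite coprime2n.
  by rewrite [m](divn_eq m 8) m8 oddD oddM andbF.
exists ((m%:R)^-1 * Y).
rewrite -quartic_cast -/R exprMn hY rmorphM /=.
have eM : ((m%:Z)%:~R : 'Z_(2 ^ k)) = m%:R by [].
by rewrite eM expr2 !mulrA (mulrV uM) mul1r (mulVr uM) mul1r.
Qed.

Lemma case_2b (p q m e : nat) : (p %% 8 = 7)%N -> q = (p + 2)%N -> (m %% 8 = 1)%N ->
  (e %% 8 = 1 \/ e %% 8 = 7)%N -> ladic_solvable 2 p q (m * e) (2 * m)%N%:Z.
Proof.
move=> p8 hq m8 e8.
pose a := (p %/ 8)%N; pose b := (e %/ 8)%N; pose c := (m %/ 8)%N.
have hp : p%:Z = 8 * a%:Z + 7 by rewrite /a {1}(divn_eq p 8) p8 PoszD PoszM mulrC.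
have hm : m%:Z = 8 * c%:Z + 1 by rewrite /c {1}(divn_eq m 8) m8 PoszD PoszM mulrC.
pose R := quarticC (R := int) p q (m * e) (2 * m)%N%:Z 1 1.
have [v hR] : exists v : int, R = 8 * m%:Z ^+ 2 * (1 + 8 * v).
  case: e8 => e8.
  - have he : e%:Z = 8 * b%:Z + 1 by rewrite /b {1}(divn_eq e 8) e8 PoszD PoszM mulrC.
    exists (4 * b%:Z ^+ 2 + b%:Z - (a%:Z + 1) * e%:Z).
    rewrite /R /quarticC natrD hq natrD !natrM !natz intz PoszM hp he; ring.
  - have he : e%:Z = 8 * b%:Z + 7 by rewrite /b {1}(divn_eq e 8) e8 PoszD PoszM mulrC.
    exists (4 * b%:Z ^+ 2 + 7 * b%:Z + 3 - (a%:Z + 1) * e%:Z).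
    rewrite /R /quarticC natrD hq natrD !natrM !natz intz PoszM hp he; ring.
have hu : (8 %| m%:Z * (1 + 8 * v) - 1)%Z.
  by apply/dvdzP; exists (c%:Z + v + 8 * c%:Z * v); rewrite hm; ring.
have s2 := hensel_2 hu.
apply: ladic_Zn => // k k0.
exists 1, 1; split; first by rewrite negb_and dvdz1.
have [T hT] := sq_cast (k:=k) (isT : prime 2) k0 s2.
exists (2 * T).
rewrite -quartic_cast -/R hR exprMn hT.
rewrite !(rmorphM, rmorphD, rmorphXn) /= ?rmorph0 ?rmorph1; ring.
Qed.


Lemma legendre_le1 (a : int) (P : nat) : legendre a P <= 1.
Proof. by rewrite /legendre; case: ifP => _ //; case: ifP. Qed.

Lemma legendre_ge (a : int) (P : nat) : 0 <= 1 - legendre a P.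
Proof. by rewrite subr_ge0 legendre_le1. Qed.

Lemma PiPlus_ge0 (p q : nat) (Ds : seq nat) (i : 'I_(size Ds)) : 0 <= @PiPlus p q Ds i.
Proof.
rewrite /PiPlus; apply: addr_ge0; last by apply: sumr_ge0 => j _; apply: legendre_ge.
by apply: addr_ge0; [apply: addr_ge0|]; apply: legendre_ge.
Qed.

Lemma floor_inv (x : int) : 0 <= x ->
  Num.floor ((1 + x%:~R)^-1 : rat) = (x == 0)%:R.
Proof.
move=> x0; have [->|nx] := eqVneq x 0.
  by rewrite rmorph0 addr0 invr1 floor1.
apply: floor_def; rewrite /= add0r rmorph0 rmorph1.
have hp : (0 : rat) < 1 + x%:~R by rewrite ltr_wpDr ?ler0z.
rewrite ltW ?invr_gt0 //= invf_lt1 // ltrDl ltr0z lt0r nx x0.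
by [].
Qed.

Definition Tset (p q : nat) (Ds : seq nat) : seq nat :=
  [seq nth 0%N Ds (nat_of_ord i) | i <- enum 'I_(size Ds) & @PiPlus p q Ds i == 0].

Lemma sum_boolT (T : eqType) (s : seq T) (Q : pred T) :
  (\sum_(k <- s) (Q k : nat))%N = count Q s.
Proof. by elim: s => [|x s IH]; rewrite ?big_nil // big_cons IH. Qed.

Lemma size_Tset (p q : nat) (Ds : seq nat) : (size (Tset p q Ds))%:Z = rhoPlus p q Ds.
Proof.
rewrite /Tset /rhoPlus size_map size_filter.
rewrite (eq_bigr (fun i => ((@PiPlus p q Ds i == 0) : nat)%:R)); last first.
  by move=> i _; rewrite floor_inv ?PiPlus_ge0.
rewrite -sumMz intz; congr Posz.
by rewrite -sum_boolT big_enum.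
Qed.

Definition goodx (p q : nat) (Ds : seq nat) (x : nat) : Prop :=
  [/\ legendre (-1) x = 1, legendre p%:Z x = 1, legendre q%:Z x = 1 &
     forall y, y \in Ds -> y != x -> legendre y%:Z x = 1].

Lemma Tset_good (p q : nat) (Ds : seq nat) (x : nat) :
  x \in Tset p q Ds -> goodx p q Ds x.
Proof.
case/mapP => i; rewrite mem_filter => /andP [/eqP h0 _] ->.
move: h0; rewrite /PiPlus => /eqP.
set x0 := nth 0%N Ds i.
have g1 := legendre_ge (-1) x0; have g2 := legendre_ge p%:Z x0.
have g3 := legendre_ge q%:Z x0.
have hS : 0 <= \sum_(j < size Ds | j != i) (1 - legendre (nth 0%N Ds j)%:Z x0).
  by apply: sumr_ge0 => j _; apply: legendre_ge.
have hab := addr_ge0 g1 g2; have habc := addr_ge0 hab g3.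
rewrite (paddr_eq0 habc hS) (paddr_eq0 hab g3) (paddr_eq0 g1 g2) !subr_eq0.
case/andP => /andP [/andP [/eqP e1 /eqP e2] /eqP e3]; rewrite psumr_eq0; last first.
  by move=> j _; apply: legendre_ge.
move=> /allP hall; split; try by [].
move=> y yD nyx.
have jD : (index y Ds < size Ds)%N by rewrite index_mem.
pose j := Ordinal jD.
have hj : nth 0%N Ds j = y by rewrite /= nth_index.
have := hall j (mem_index_enum _).
have -> : (j != i).
  by apply: contra nyx => /eqP ji; rewrite -hj ji.
by rewrite /= subr_eq0 hj => /eqP <-.
Qed.

Lemma Tset_uniq (p q : nat) (Ds : seq nat) : uniq Ds -> uniq (Tset p q Ds).
Proof.
move=> uD; rewrite /Tset map_inj_in_uniq.
  by apply: filter_uniq; apply: enum_uniq.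
move=> i j _ _ /eqP; rewrite nth_uniq // => /eqP; exact: val_inj.
Qed.

Lemma Tset_sub (p q : nat) (Ds : seq nat) : {subset Tset p q Ds <= Ds}.
Proof. by move=> x /mapP [i _ ->]; rewrite mem_nth. Qed.

Lemma dvd_prodD (Ds : seq nat) (y : nat) : y \in Ds -> (y %| prodD Ds)%N.
Proof.
rewrite /prodD; elim: Ds => [|x s IH] //; rewrite in_cons big_cons => /orP [/eqP ->|ys].
  exact: dvdn_mulr.
by apply: dvdn_mull; apply: IH.
Qed.

Lemma Ds_fact (p q : nat) (Ds : seq nat) (y : nat) : all prime Ds ->
  ~~ (2 %| prodD Ds)%N -> ~~ (p %| prodD Ds)%N -> ~~ (q %| prodD Ds)%N -> y \in Ds ->
  [/\ prime y, odd y, y != p, y != q & y != 2%N].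
Proof.
move=> aP n2 np nq yD.
have py : prime y by move/allP: aP; apply.
have dy := dvd_prodD yD.
have y2 : y != 2%N by apply: contra n2 => /eqP <-.
split => //.
- by case: (even_prime py) => // e; rewrite e in y2.
- by apply: contra np => /eqP <-.
- by apply: contra nq => /eqP <-.
Qed.

Lemma sqmod_of (l : nat) (a : int) : prime l -> odd l -> ~~ (l %| `|a|)%N -> qr l a ->
  sqmod l a.
Proof. by move=> pl ol na hq; apply: hensel_odd. Qed.

Lemma good_facts (p q : nat) (Ds : seq nat) (x : nat) : prime p -> prime q -> odd p -> odd q ->
  all prime Ds -> ~~ (2 %| prodD Ds)%N -> ~~ (p %| prodD Ds)%N -> ~~ (q %| prodD Ds)%N ->
  x \in Ds -> goodx p q Ds x ->
  [/\ (x %% 4 = 1)%N, qr x p%:Z, qr x q%:Z, qr p x%:Z /\ qr q x%:Z &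
      forall y, y \in Ds -> y != x -> qr x y%:Z /\ qr y x%:Z].
Proof.
move=> pp pq op oq aP n2 np nq xD [l1 lp lq ly].
have [px ox xp xq x2] := Ds_fact aP n2 np nq xD.
have x4 : (x %% 4 = 1)%N by apply: supp1 => //; case: (legendre1 l1).
have qp : qr x p%:Z by case: (legendre1 lp).
have qq : qr x q%:Z by case: (legendre1 lq).
split => //.
  by split; apply: recip => //; rewrite eq_sym.
move=> y yD yx; have [py oy yp yq y2] := Ds_fact aP n2 np nq yD.
have qy : qr x y%:Z by case: (legendre1 (ly y yD yx)).
by split => //; apply: recip => //; rewrite eq_sym.
Qed.

Lemma all_prime_sub (Ds U : seq nat) : all prime Ds -> {subset U <= Ds} -> all prime U.
Proof. by move=> /allP aP sU; apply/allP => x /sU /aP. Qed.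

Lemma filt_sub (Ds U : seq nat) : {subset [seq y <- Ds | y \notin U] <= Ds}.
Proof. by move=> y; rewrite mem_filter => /andP []. Qed.

Lemma selmer1 (p q : nat) (Ds U : seq nat) :
  prime p -> prime q -> odd p -> odd q -> q = (p + 2)%N ->
  uniq Ds -> all prime Ds ->
  ~~ (2 %| prodD Ds)%N -> ~~ (p %| prodD Ds)%N -> ~~ (q %| prodD Ds)%N ->
  uniq U -> {subset U <= Ds} -> (forall x, x \in U -> goodx p q Ds x) ->
  in_selmer p q Ds (\prod_(l <- U) l)%N%:Z.
Proof.
move=> pp pq op oq hq uD aP n2 np nq uU sU gU.
set m := (\prod_(l <- U) l)%N.
set e := (\prod_(l <- [seq y <- Ds | y \notin U]) l)%N.
have hD : prodD Ds = (m * e)%N by apply: prodD_split.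
have pU := all_prime_sub aP sU.
have pE := all_prime_sub aP (@filt_sub Ds U).
have gf : forall x, x \in U -> _ := fun x xU =>
  good_facts pp pq op oq aP n2 np nq (sU x xU) (gU x xU).
split.
  apply: QS2_prod => // x xU; rewrite /Sfin !in_cons (sU x xU) !orbT //.
split.
  by apply: real_pos; rewrite ltz_nat prod_gt0.
move=> l; rewrite /Sfin !in_cons => /orP [/eqP ->|/orP [/eqP ->|/orP [/eqP ->|lD]]].
- have m4 : (m %% 4 = 1)%N.
    by apply: mod_prod => // x xU; case: (gf x xU).
  have [m1|m5] : (m %% 8 = 1 \/ m %% 8 = 5)%N by lia.
    apply: ladic_sq => //; apply: hensel_2; apply/dvdzP; exists (m %/ 8)%N%:Z.
    by rewrite {1}(divn_eq m 8) m1 PoszD PoszM; ring.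
  rewrite hD; apply: case_2a => //.
  by move: n2; rewrite hD dvdn2 negbK.
- apply: ladic_sq => //; apply: sqmod_of => //=.
    apply/negP => /(prime_in_prod pp pU) /sU pD.
    by have [_ _ /eqP] := Ds_fact aP n2 np nq pD.
  by apply: qr_prod => x xU; case: (gf x xU) => _ _ _ [].
- apply: ladic_sq => //; apply: sqmod_of => //=.
    apply/negP => /(prime_in_prod pq pU) /sU qD.
    by have [_ _ _ /eqP] := Ds_fact aP n2 np nq qD.
  by apply: qr_prod => x xU; case: (gf x xU) => _ _ _ [].
have [py oy yp yq y2] := Ds_fact aP n2 np nq lD.
have [lU|nlU] := boolP (l \in U).
  have [_ gyp gyq _ gyy] := gf l lU.
  rewrite hD; apply: case_root1 => //.
  - apply: sqmod_of => //=; by rewrite dvdn_prime2 // (negbTE yp).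
  - apply: sqmod_of => //=; by rewrite dvdn_prime2 // (negbTE yq).
  apply: sqmod_of => //=.
    apply/negP => /(prime_in_prod py pE); rewrite mem_filter lU.
    by [].
  apply: qr_prod => z; rewrite mem_filter => /andP [zU zD].
  have zl : z != l by apply: contra zU => /eqP ->.
  by case: (gyy z zD zl).
apply: ladic_sq => //; apply: sqmod_of => //=.
  by apply/negP => /(prime_in_prod py pU); apply/negP.
apply: qr_prod => x xU; have [_ _ _ _ gx] := gf x xU.
have lx : l != x by apply: contra nlU => /eqP ->.
by case: (gx l lD lx).
Qed.

Lemma mod_prod_pm (U : seq nat) :
  (forall x, x \in U -> x %% 8 = 1 \/ x %% 8 = 7)%N ->
  ((\prod_(x <- U) x) %% 8 = 1 \/ (\prod_(x <- U) x) %% 8 = 7)%N.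
Proof.
elim: U => [|x U IH] h; first by rewrite big_nil; left.
rewrite big_cons -modnMm.
have IH' := IH (fun y yU => h y (@mem_behead _ (x :: U) y yU)).
by case: (h x (mem_head _ _)) => ->; case: IH' => ->; [left|right|right|left].
Qed.

Lemma ndvd_2m (l m : nat) : prime l -> odd l -> ~~ (l %| m)%N -> ~~ (l %| 2 * m)%N.
Proof.
move=> pl ol nm; rewrite Euclid_dvdM // negb_or nm andbT dvdn_prime2 //.
by apply/negP => /eqP e; rewrite e in ol.
Qed.

Lemma selmer2 (p q : nat) (Ds U : seq nat) :
  prime p -> prime q -> odd p -> odd q -> q = (p + 2)%N ->
  uniq Ds -> all prime Ds ->
  ~~ (2 %| prodD Ds)%N -> ~~ (p %| prodD Ds)%N -> ~~ (q %| prodD Ds)%N ->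
  (p %% 8 = 7)%N -> all (fun l => (l %% 8 == 1) || (l %% 8 == 7))%N Ds ->
  uniq U -> {subset U <= Ds} -> (forall x, x \in U -> goodx p q Ds x) ->
  in_selmer p q Ds (2 * \prod_(l <- U) l)%N%:Z.
Proof.
move=> pp pq op oq hq uD aP n2 np nq p8 a8 uU sU gU.
set m := (\prod_(l <- U) l)%N.
set e := (\prod_(l <- [seq y <- Ds | y \notin U]) l)%N.
have hD : prodD Ds = (m * e)%N by apply: prodD_split.
have pU := all_prime_sub aP sU.
have pE := all_prime_sub aP (@filt_sub Ds U).
have gf : forall x, x \in U -> _ := fun x xU =>
  good_facts pp pq op oq aP n2 np nq (sU x xU) (gU x xU).
have D8 : forall y, y \in Ds -> (y %% 8 = 1 \/ y %% 8 = 7)%N.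
  by move=> y /(allP a8) /orP [] /eqP ->; [left|right].
have q8 : (q %% 8 = 1)%N by lia.
split.
  rewrite (_ : (2 * m)%N = \prod_(l <- 2%N :: U) l); last by rewrite big_cons.
  apply: QS2_prod => //=.
  - rewrite uU andbT; apply/negP => /sU h2.
    by have [_ _ _ _ /eqP] := Ds_fact aP n2 np nq h2.
  - move=> x; rewrite in_cons => /orP [/eqP ->|xU]; first by rewrite /Sfin mem_head.
    by rewrite /Sfin !in_cons (sU x xU) !orbT.
split.
  by apply: real_pos; rewrite ltz_nat muln_gt0 prod_gt0.
move=> l; rewrite /Sfin !in_cons => /orP [/eqP ->|/orP [/eqP ->|/orP [/eqP ->|lD]]].
- have m4 : (m %% 8 = 1)%N.
    apply: mod_prod => // x xU; have [x4 _ _ _ _] := gf x xU.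
    by case: (D8 x (sU x xU)); lia.
  rewrite hD; apply: case_2b => //.
  by apply: mod_prod_pm => y; rewrite mem_filter => /andP [_ /D8].
- apply: ladic_sq => //; apply: sqmod_of => //=.
    apply: ndvd_2m => //; apply/negP => /(prime_in_prod pp pU) /sU pD.
    by have [_ _ /eqP] := Ds_fact aP n2 np nq pD.
  rewrite PoszM; apply: qr_mul; first by apply: supp2 => //; right.
  by apply: qr_prod => x xU; case: (gf x xU) => _ _ _ [].
- apply: ladic_sq => //; apply: sqmod_of => //=.
    apply: ndvd_2m => //; apply/negP => /(prime_in_prod pq pU) /sU qD.
    by have [_ _ _ /eqP] := Ds_fact aP n2 np nq qD.
  rewrite PoszM; apply: qr_mul; first by apply: supp2 => //; left.
  by apply: qr_prod => x xU; case: (gf x xU) => _ _ _ [].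
have [py oy yp yq y2] := Ds_fact aP n2 np nq lD.
have s2 : qr l 2 by apply: supp2 => //; apply: D8.
have [lU|nlU] := boolP (l \in U).
  have [_ gyp gyq _ gyy] := gf l lU.
  rewrite hD; apply: case_root2 => //.
  - apply: sqmod_of => //=; by rewrite dvdn_prime2 // (negbTE yp).
  - apply: sqmod_of => //=; by rewrite dvdn_prime2 // (negbTE yq).
  - apply: sqmod_of => //=.
      apply/negP => /(prime_in_prod py pE); rewrite mem_filter lU.
      by [].
    apply: qr_prod => z; rewrite mem_filter => /andP [zU zD].
    have zl : z != l by apply: contra zU => /eqP ->.
    by case: (gyy z zD zl).
  apply: sqmod_of => //=; by rewrite dvdn_prime2 // eq_sym.
apply: ladic_sq => //; apply: sqmod_of => //=.
  by apply: ndvd_2m => //; apply/negP => /(prime_in_prod py pU); apply/negP.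
rewrite PoszM; apply: qr_mul => //.
apply: qr_prod => x xU; have [_ _ _ _ gx] := gf x xU.
have lx : l != x by apply: contra nlU => /eqP ->.
by case: (gx l lD lx).
Qed.

Unset Implicit Arguments.

Theorem theorem1p1 (p q : nat) (Ds : seq nat) :
  prime p -> prime q -> odd p -> odd q -> q = (p + 2)%N ->
  uniq Ds -> all prime Ds ->
  ~~ (2 %| prodD Ds)%N -> ~~ (p %| prodD Ds)%N -> ~~ (q %| prodD Ds)%N ->
  (exists T : seq nat,
     [/\ uniq T, {subset T <= Ds}, (size T)%:Z = rhoPlus p q Ds &
      forall U : seq nat, subseq U T ->
        in_selmer p q Ds (\prod_(l <- U) l)%N%:Z]) /\
  ((p %% 8 = 7)%N -> all (fun l => (l %% 8 == 1) || (l %% 8 == 7))%N Ds ->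
   exists T : seq nat,
     [/\ uniq T, {subset T <= Ds}, (size T)%:Z = rhoPlus p q Ds &
      forall U : seq nat, subseq U T ->
        in_selmer p q Ds (\prod_(l <- U) l)%N%:Z /\
        in_selmer p q Ds (2 * \prod_(l <- U) l)%N%:Z]).
Proof.
move=> pp pq op oq hq uD aP n2 np nq.
have uT := Tset_uniq p q uD.
have hU : forall U, subseq U (Tset p q Ds) ->
  [/\ uniq U, {subset U <= Ds} & forall x, x \in U -> goodx p q Ds x].
  move=> U sUT; split.
  - exact: subseq_uniq sUT uT.
  - by move=> x /(mem_subseq sUT) /Tset_sub.
  - by move=> x /(mem_subseq sUT) /Tset_good.
split.
  exists (Tset p q Ds); split.
  - exact: uT.
  - exact: Tset_sub.
  - exact: size_Tset.
  move=> U /hU [uU sU gU]; exact: selmer1.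
move=> p8 a8; exists (Tset p q Ds); split.
- exact: uT.
- exact: Tset_sub.
- exact: size_Tset.
move=> U /hU [uU sU gU]; split; [exact: selmer1 | exact: selmer2].
Qed.
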